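(* Let $\mathbb{F}$ be a field of characteristic $2$, $\mathbb{F}'\subseteq\mathbb{F}$ a subfield, and $h$ a positive integer. Let $S\subseteq\mathbb{F}$ be a set with $|S|=n$ that is $2h$-wise independent over $\mathbb{F}'$. Let $r$ be a positive integer such that $\ell=\frac{n}{r+1}$ is an integer, and index the elements of $S$ as $S=\{\alpha_{i,s}\}_{i\in[\ell],s\in[r+1]}$. Then for every ${\bf e}\in[r+1]^\ell$ the multi-set $T(S,{\bf e})=\{\alpha_{i,s}+\alpha_{i,{\bf e}(i)}\}_{i\in[\ell],\,s\in[r+1]\setminus\{{\bf e}(i)\}}$ is $h$-wise independent over $\mathbb{F}'$.
   Context: A multi-set $T\subseteq\mathbb{F}$ is $t$-wise independent over a subfield $\mathbb{F}'$ if every sub-multi-set of $T$ of size at most $t$ is linearly independent over $\mathbb{F}'$. *)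

(* Defs.v *)
From mathcomp Require Import all_boot all_order all_algebra.
Set Implicit Arguments. Unset Strict Implicit. Unset Printing Implicit Defensive.
Import GRing.Theory.
Local Open Scope ring_scope.

(* Repeated values at different indices count with multiplicity. *)
Definition lin_indep_over (F : fieldType) (K : {pred F}) (I : finType)
    (x : I -> F) (A : {set I}) : Prop :=
  forall c : I -> F, (forall i, i \in A -> c i \in K) ->
    \sum_(i in A) c i * x i = 0 -> forall i, i \in A -> c i = 0.

Definition twise_indep (F : fieldType) (K : {pred F}) (I : finType)
    (t : nat) (x : I -> F) (D : {set I}) : Prop :=
  forall A : {set I}, A \subset D -> (#|A| <= t)%N -> lin_indep_over K x A.

Definition Tfam (F : fieldType) (l r : nat) (alpha : 'I_l -> 'I_r.+1 -> F)
    (e : 'I_l -> 'I_r.+1) : 'I_l * 'I_r.+1 -> F :=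
  fun p => alpha p.1 p.2 + alpha p.1 (e p.1).

Definition Tdom (l r : nat) (e : 'I_l -> 'I_r.+1) : {set 'I_l * 'I_r.+1} :=
  [set p | p.2 != e p.1].

(* Main.v *)
Require Import Defs.
From mathcomp Require Import all_boot all_order all_algebra.
Local Open Scope ring_scope.
Import GRing.Theory.

Theorem lemma11 (F : fieldType) (K : divringClosed F) (h l r : nat)
    (alpha : 'I_l -> 'I_r.+1 -> F) :
  2%N \in [pchar F] -> (0 < h)%N -> (0 < r)%N ->
  injective (fun p : 'I_l * 'I_r.+1 => alpha p.1 p.2) ->
  twise_indep K (2 * h) (fun p : 'I_l * 'I_r.+1 => alpha p.1 p.2) setT ->
  forall e : 'I_l -> 'I_r.+1,
    twise_indep K h (Tfam alpha e) (Tdom e).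
Proof.
move=> _ _ _ _ Hind e A AD Ah c cK Hs.
set f := fun p : 'I_l * 'I_r.+1 => (p.1, e p.1).
set C := [set f x | x in A].
set d := fun q => if q \in A then c q else \sum_(p in A | f p == q) c p.
have disj : [disjoint A & C].
  rewrite -setI_eq0; apply/eqP/setP => q; rewrite !inE.
  apply/andP => -[qA /imsetP[p pA qE]].
  move/subsetP: AD => /(_ q qA); rewrite inE qE /= eqxx //.
have HB := Hind (A :|: C) (subsetT _).
have card : (#|A :|: C| <= 2 * h)%N.
  rewrite cardsU; apply: leq_trans (leq_subr _ _) _.
  have := leq_imset_card f A; rewrite -/C => HC.
  rewrite mul2n -addnn; apply: leq_add => //; exact: leq_trans HC Ah.
have dK : forall i, i \in A :|: C -> d i \in K.
  move=> i _; rewrite /d; case: ifP => iA; first exact: cK.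
  by apply: rpred_sum => p /andP[pA _]; apply: cK.
have sum0 : \sum_(i in A :|: C) d i * alpha i.1 i.2 = 0.
  rewrite (eq_bigl [predU A & C]); last by move=> q; rewrite !inE.
  rewrite bigU //=.
  rewrite (eq_bigr (fun i => c i * alpha i.1 i.2)); last by move=> i iA; rewrite /d iA.
  have -> : \sum_(i in C) d i * alpha i.1 i.2 = \sum_(q in C) \sum_(p in A | f p == q) c p * alpha (f p).1 (f p).2.
    apply: eq_bigr.
    move=> q qC.
    have qA : (q \in A) = false.
      first [exact: (disjointFr disj qC) | exact: (disjointFl disj qC)].
    rewrite /d qA.
    rewrite mulr_suml; apply: eq_bigr => p /andP[_ /eqP <-] //.
  rewrite -(partition_big f (mem C)); last by move=> p pA; apply/imsetP; exists p.
  rewrite -big_split /= -[RHS]Hs; apply: eq_bigr => p _.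
  by rewrite /Tfam mulrDr.
move=> i iA.
have := HB card d dK sum0 i; rewrite inE iA /= => /(_ isT).
by rewrite /d iA.
Qed.
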